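(* For all integers $1\le l\le k$, the Fox function satisfies $\phi(2l,2k)=-\binom{k}{l}$.
   Context: For integers $0\le l\le k$, the Fox function is $\phi(l,k)=\sum_{\mathbf a}(-1)^{w(\mathbf a)+(l-1)}$, where the sum runs over all $l$-element subsets $\mathbf a\subseteq\{1,\dots,k\}$, $\mathbf b=\{1,\dots,k\}\setminus\mathbf a$, and $w(\mathbf a)$ is the number of pairs $(i,j)$ with $i\in\mathbf a$, $j\in\mathbf b$ and $j<i$. *)

(* Defs.v *)
From mathcomp Require Import all_boot all_order all_algebra.
Set Implicit Arguments. Unset Strict Implicit. Unset Printing Implicit Defensive.
Import GRing.Theory Num.Theory.
Local Open Scope ring_scope.

(* {1,...,k} is represented by 'I_k (element i+1 <-> ordinal i; order preserved). *)

Definition fox_w (k : nat) (a : {set 'I_k}) : nat :=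
  #|[set p : 'I_k * 'I_k | (p.1 \in a) && (p.2 \notin a) && (p.2 < p.1)%N]|.

(* phi(l,k) = sum over l-subsets a of (-1)^(w(a) + (l-1)).
   The sign (-1)^(l-1) equals (-1)^(l+1) for every integer l, so we use the
   exponent w(a) + l + 1 to avoid truncated subtraction at l = 0. *)
Definition fox_phi (l k : nat) : int :=
  \sum_(a : {set 'I_k} | #|a| == l) (-1) ^+ (fox_w a + l + 1).

(* Main.v *)
Require Import Defs.
From mathcomp Require Import all_boot all_order all_algebra.
Local Open Scope ring_scope.
Set Implicit Arguments. Unset Strict Implicit.
Import GRing.Theory Num.Theory.

Lemma w_alt k (a : {set 'I_k}) : fox_w a =
  (\sum_(i < k) \sum_(j < k) ((i \in a) && (j \notin a) && (j < i)%N : nat))%N.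
Proof.
rewrite /fox_w -sum1_card pair_big /= big_mkcond /=.
apply: eq_bigr => p _; rewrite inE; by case: ifP.
Qed.

Lemma card_sum k (a : {set 'I_k}) : #|a| = (\sum_(i < k) (i \in a : nat))%N.
Proof. rewrite -sum1_card big_mkcond /=; apply: eq_bigr => i _; by case: ifP. Qed.

Definition gS k (x : bool * {set 'I_k}) : {set 'I_k.+1} :=
  if x.1 then ord0 |: [set lift ord0 i | i in x.2] else [set lift ord0 i | i in x.2].
Definition gS' k (A : {set 'I_k.+1}) : bool * {set 'I_k} :=
  (ord0 \in A, [set i | lift ord0 i \in A]).

Lemma l0 k (i : 'I_k) : (lift ord0 i == ord0) = false.
Proof. by rewrite eq_sym (negbTE (neq_lift _ _)). Qed.
Lemma l0' k (i : 'I_k) : (ord0 == lift ord0 i) = false.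
Proof. by rewrite (negbTE (neq_lift _ _)). Qed.

Lemma memL k (a : {set 'I_k}) i : (lift ord0 i \in [set lift ord0 i | i in a]) = (i \in a).
Proof. by rewrite mem_imset //; exact: lift_inj. Qed.
Lemma mem0L k (a : {set 'I_k}) : (ord0 \in [set lift ord0 i | i in a]) = false.
Proof. apply/imsetP => -[i _] /esym/eqP; by rewrite l0. Qed.

Lemma gSK k : cancel (@gS k) (@gS' k).
Proof.
move=> [b a]; rewrite /gS /gS' /=; case: b => /=; congr pair.
- by rewrite !inE eqxx.
- by apply/setP => i; rewrite !inE memL l0.
- by rewrite mem0L.
- by apply/setP => i; rewrite !inE memL.
Qed.

Lemma gS'K k : cancel (@gS' k) (@gS k).
Proof.
move=> A; rewrite /gS /gS' /=; apply/setP => i.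
case: (unliftP ord0 i) => [j|] ->.
  case: (ord0 \in A); by rewrite ?inE ?memL ?inE ?l0.
case: ifP => h; by rewrite ?inE ?eqxx ?mem0L.
Qed.

Lemma wF k (a : {set 'I_k}) : fox_w (gS (false, a)) = (fox_w a + #|a|)%N.
Proof.
rewrite !w_alt card_sum /gS /= big_ord_recl /= mem0L /= big1 // add0n addnC -big_split /=.
apply: eq_bigr => i _; rewrite big_ord_recl /= memL mem0L /= andbT; congr addn.
  by rewrite andbT.
apply: eq_bigr => j _; by rewrite !memL /bump /= !add1n ltnS.
Qed.

Lemma wT k (a : {set 'I_k}) : fox_w (gS (true, a)) = fox_w a.
Proof.
rewrite !w_alt /gS /= big_ord_recl /= big1; last first.
  by move=> j _; rewrite andbF.
rewrite add0n; apply: eq_bigr => i _; rewrite big_ord_recl /= !inE eqxx /= andbF add0n.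
apply: eq_bigr => j _; by rewrite !inE !memL !l0.
Qed.

Lemma cardF k (a : {set 'I_k}) : #|gS (false, a)| = #|a|.
Proof. by rewrite /gS /= card_imset //; exact: lift_inj. Qed.
Lemma cardT k (a : {set 'I_k}) : #|gS (true, a)| = #|a|.+1.
Proof. by rewrite /gS /= cardsU1 mem0L card_imset //; exact: lift_inj. Qed.

Definition G k l : int := \sum_(a : {set 'I_k} | #|a| == l) (-1) ^+ fox_w a.

Lemma G_rec k l : G k.+1 l = (if l is l'.+1 then G k l' else 0) + (-1) ^+ l * G k l.
Proof.
rewrite /G (reindex (@gS k)); last by exists (@gS' k) => x _; [apply: gSK|apply: gS'K].
rewrite big_mkcond /=.
transitivity (\sum_(b : bool) \sum_(a : {set 'I_k})
   (if #|gS (b, a)| == l then (-1) ^+ fox_w (gS (b, a)) else 0 : int)).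
  by rewrite pair_big /=; apply: eq_bigr => -[b a] _.
rewrite big_bool /=; congr (_ + _).
  under eq_bigr => a _ do rewrite cardT wT.
  case: l => [|l]; first by rewrite big1.
  rewrite [RHS]big_mkcond /=; apply: eq_bigr => a _; by rewrite eqSS.
rewrite big_distrr /= [RHS]big_mkcond /=; apply: eq_bigr => a _.
rewrite cardF wF; case: eqP => [->|_]; last by rewrite ?mulr0.
by rewrite exprD mulrC.
Qed.

Lemma G0 l : G 0 l = (l == 0%N)%:Z.
Proof.
have E (a : {set 'I_0}) : a = set0 by apply/setP => i; case: (ltn_ord i) => /=; rewrite ltn0.
case: l => [|l].
  rewrite /G (big_pred1 set0); first by rewrite w_alt big_ord0.
  by move=> a /=; rewrite (E a) cards0 !eqxx.
rewrite /G big_pred0 // => a; by rewrite (E a) cards0.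
Qed.

Lemma sgE l : (-1) ^+ l.*2 = 1 :> int.
Proof. by rewrite -signr_odd odd_double. Qed.
Lemma sgO l : (-1) ^+ l.*2.+1 = -1 :> int.
Proof. by rewrite -signr_odd /= odd_double. Qed.

Lemma stepE k : (forall l, G k.*2 l.*2 = 'C(k, l) /\ G k.*2 l.*2.+1 = 0) ->
  forall l, G k.*2.+1 l.*2 = 'C(k, l) /\ G k.*2.+1 l.*2.+1 = 'C(k, l).
Proof.
move=> H l; rewrite !G_rec sgE sgO !(H l).1 !(H l).2 mul1r mulN1r oppr0 addr0; split=> //.
case: l H => [|l] H; first by rewrite /= add0r bin0.
by rewrite doubleS (H l).2 add0r.
Qed.

Lemma stepO k : (forall l, G k.*2.+1 l.*2 = 'C(k, l) /\ G k.*2.+1 l.*2.+1 = 'C(k, l)) ->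
  forall l, G k.+1.*2 l.*2 = 'C(k.+1, l) /\ G k.+1.*2 l.*2.+1 = 0.
Proof.
move=> H l; rewrite doubleS !(G_rec k.*2.+1) sgE sgO !(H l).1 !(H l).2 mul1r mulN1r addrN; split=> //.
case: l => [|l]; first by rewrite /= add0r !bin0.
by rewrite doubleS (H l).2 binS PoszD addrC.
Qed.

Lemma Geven k : forall l, G k.*2 l.*2 = 'C(k, l) /\ G k.*2 l.*2.+1 = 0.
Proof.
elim: k => [|k IH] l.
  by rewrite !G0 bin0n /=; case: l.
exact: stepO (stepE IH) l.
Qed.

Theorem proposition2p5 (l k : nat) (hl : (1 <= l)%N) (hlk : (l <= k)%N) :
  fox_phi (2 * l) (2 * k) = - ('C(k, l))%:Z.
Proof.
have -> : fox_phi (2 * l) (2 * k) = - G (2 * k) (2 * l).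
  rewrite /fox_phi /G -sumrN; apply: eq_bigr => a _.
  by rewrite -addnA addn1 exprD [(2 * l)%N]mul2n sgO mulrN1.
have E : (2 * l)%R = l.*2 :> nat by rewrite -mul2n.
by rewrite !mul2n E (Geven k l).1.
Qed.
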